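(* Let $\chi>0$, $\phi\in C^1(\mathbb{R})$ with $\phi'>0$, $\phi(0)>0$, and $g\in C^1([0,\infty))$ positive with exactly one $\beta>0$ such that $g'<0$ on $[0,\beta)$ and $g'>0$ on $(\beta,\infty)$. Let $g(\beta)<u_-<\min\{g(0),\lim_{V\to\infty}g(V)\}$, $0<v_+<\beta<v_-$ with $g(v_\pm)=u_-$, $Q(V)=(v_--V)^2\inf_{z\in(V,v_-]}g'(z)$ on $(\beta,v_-)$, $s_2:=\chi\big(1-\frac{u_-}{g(0)}\big)^{-1}\big[\phi\big(\sqrt{\frac{1}{v_--\beta}\int_\beta^{v_-}Q}\big)-\frac{u_-\phi(0)}{g(0)}\big]$, $B(V)=\frac{s}{\chi}+\frac{u_-}{g(V)}\big(\phi(0)-\frac{s}{\chi}\big)$, $h(W)=\frac{u_-(\chi\phi(0)-s)}{\chi\phi(W)-s}$. Suppose $\chi\phi(0)<s<s_2$, let $v^*\in(\beta,v_-)$ satisfy $0<\phi^{-1}(B(0))<\sqrt{Q(v^* )}$, and choose $w^*$ with $\phi^{-1}(B(0))<w^*<\sqrt{Q(v^* )}$. Then the negative eigenvalue $\lambda_2(E_-)=\frac{-h'(0)-\sqrt{h'(0)^2+4g'(v_-)}}{2}$ of the linearization of $V'=W$, $W'=-h(W)+g(V)$ at $E_-=(v_-,0)$ satisfies $\lambda_2(E_-)<-\frac{w^*}{v_--v^*}<0$. *)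

(* Defs.v *)
From Stdlib Require Import Reals.
From Coquelicot Require Import Coquelicot.
Open Scope R_scope.

Definition inf_deriv (dg : R -> R) (V vm : R) : R :=
  real (Glb_Rbar (fun y => exists z, V < z <= vm /\ y = dg z)).

Definition Qfun (dg : R -> R) (vm V : R) : R :=
  (vm - V) ^ 2 * inf_deriv dg V vm.

Definition s2 (chi : R) (phi g dg : R -> R) (um beta vm : R) : R :=
  chi * / (1 - um / g 0) *
  (phi (sqrt (/ (vm - beta) * RInt (Qfun dg vm) beta vm)) - um * phi 0 / g 0).

Definition Bfun (chi : R) (phi g : R -> R) (um s V : R) : R :=
  s / chi + um / g V * (phi 0 - s / chi).

Definition hfun (chi : R) (phi : R -> R) (um s W : R) : R :=
  um * (chi * phi 0 - s) / (chi * phi W - s).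

Definition lambda2 (chi : R) (phi dg : R -> R) (um s vm : R) : R :=
  let hp := Derive (hfun chi phi um s) 0 in
  (- hp - sqrt (hp ^ 2 + 4 * dg vm)) / 2.

(* Main.v *)
Require Import Defs.
From Stdlib Require Import Reals Lra.
From Coquelicot Require Import Coquelicot.
Open Scope R_scope.

Theorem proposition2p11
  (chi : R) (phi dphi g dg : R -> R)
  (beta um vp vm s vstar wstar winv : R) (Lg : Rbar)
  (* chi > 0 *)
  (Hchi : 0 < chi)
  (* phi in C^1(R), phi' > 0, phi(0) > 0 *)
  (Hphi_der : forall x, is_derive phi x (dphi x))
  (Hdphi_cont : forall x, continuous dphi x)
  (Hdphi_pos : forall x, 0 < dphi x)
  (Hphi0 : 0 < phi 0)
  (* g in C^1([0,oo)) with derivative dg (one-sided at 0), g > 0 *)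
  (Hg_der : forall x, 0 < x -> is_derive g x (dg x))
  (Hg_der0 : filterlim (fun x => (g x - g 0) / x) (at_right 0) (locally (dg 0)))
  (Hdg_cont : forall x, 0 <= x ->
     filterlim dg (within (fun y => 0 <= y) (locally x)) (locally (dg x)))
  (Hg_pos : forall x, 0 <= x -> 0 < g x)
  (* beta > 0: g' < 0 on [0,beta), g' > 0 on (beta,oo) *)
  (Hbeta : 0 < beta)
  (Hdg_neg : forall x, 0 <= x < beta -> dg x < 0)
  (Hdg_pos : forall x, beta < x -> 0 < dg x)
  (* Lg = lim_{V -> oo} g(V) (possibly +oo) *)
  (HLg : is_lim g p_infty Lg)
  (* g(beta) < u_- < min{g(0), lim g} *)
  (Hum1 : g beta < um) (Hum2 : um < g 0) (Hum3 : Rbar_lt (Finite um) Lg)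
  (* 0 < v_+ < beta < v_-, g(v_+-) = u_- *)
  (Hvp : 0 < vp < beta) (Hvm : beta < vm)
  (Hgvp : g vp = um) (Hgvm : g vm = um)
  (* chi phi(0) < s < s_2 *)
  (Hs1 : chi * phi 0 < s) (Hs2 : s < s2 chi phi g dg um beta vm)
  (* vstar in (beta, v_-), winv = phi^{-1}(B(0)), 0 < winv < sqrt(Q(vstar)) *)
  (Hvstar : beta < vstar < vm)
  (Hwinv : phi winv = Bfun chi phi g um s 0)
  (Hwinv_bd : 0 < winv < sqrt (Qfun dg vm vstar))
  (* phi^{-1}(B(0)) < wstar < sqrt(Q(vstar)) *)
  (Hwstar : winv < wstar < sqrt (Qfun dg vm vstar)) :
  lambda2 chi phi dg um s vm < - (wstar / (vm - vstar)) /\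
  - (wstar / (vm - vstar)) < 0.
Proof.
  set (cc := chi * phi 0 - s).
  assert (Hc : cc < 0) by (unfold cc; lra).
  assert (Hum0 : 0 < um) by (pose proof (Hg_pos beta (Rlt_le _ _ Hbeta)); lra).
  assert (Hder : is_derive (hfun chi phi um s) 0 (um * cc * (- (chi * dphi 0) / cc ^ 2))).
  { unfold hfun.
    assert (H1 : is_derive (fun W => chi * phi W - s) 0 (chi * dphi 0)).
    { pose proof (@is_derive_minus R_AbsRing R_NormedModule (fun W => chi * phi W) (fun _ => s) 0 _ _
        (is_derive_scal _ _ chi _ (Hphi_der 0)) (@is_derive_const R_AbsRing R_NormedModule s 0)) as H.
      replace (chi * dphi 0) with (minus (chi * dphi 0) (@zero R_NormedModule)).
      exact H. unfold minus, zero, opp, plus; simpl. ring. }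
    pose proof (is_derive_inv _ _ _ H1) as H2.
    assert (Hne : chi * phi 0 - s <> 0) by lra.
    specialize (H2 Hne).
    pose proof (is_derive_scal _ _ (um * cc) _ H2) as H3.
    eapply is_derive_ext; [|exact H3]. intros t; simpl. unfold Rdiv. reflexivity. }
  apply is_derive_unique in Hder.
  set (hp := um * cc * (- (chi * dphi 0) / cc ^ 2)) in Hder.
  assert (Hhp : 0 <= hp).
  { unfold hp. replace (um * cc * (- (chi * dphi 0) / cc ^ 2)) with (um * chi * dphi 0 / (- cc)) by (field; lra).
    pose proof (Hdphi_pos 0). apply Rlt_le. apply Rdiv_lt_0_compat; [|lra].
    apply Rmult_lt_0_compat; [apply Rmult_lt_0_compat|]; lra. }
  assert (Hinf : inf_deriv dg vstar vm <= dg vm \/ inf_deriv dg vstar vm = 0).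
  { unfold inf_deriv.
    destruct (Glb_Rbar_correct (fun y => exists z, vstar < z <= vm /\ y = dg z)) as [Hlb _].
    assert (HH := Hlb (dg vm) (ex_intro _ vm (conj (conj (proj2 Hvstar) (Rle_refl _)) eq_refl))).
    destruct (Glb_Rbar _) as [r| |]; simpl in *; [left; exact HH| contradiction | right; reflexivity]. }
  set (Q := Qfun dg vm vstar) in *.
  assert (HQpos : 0 < Q).
  { destruct (Rle_or_lt Q 0) as [h|h]; [|exact h].
    rewrite (sqrt_neg_0 Q h) in Hwinv_bd. lra. }
  assert (Hd : 0 < vm - vstar) by lra.
  set (k := wstar / (vm - vstar)).
  assert (Hk : 0 < k) by (unfold k; apply Rdiv_lt_0_compat; lra).
  assert (Hw2 : wstar * wstar < Q).
  { rewrite <- (sqrt_sqrt Q) by lra. apply Rmult_le_0_lt_compat; lra. }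
  assert (Hk2 : k * k < dg vm).
  { assert (HQ : Q = (vm - vstar) ^ 2 * inf_deriv dg vstar vm) by reflexivity.
    destruct Hinf as [Hinf|Hinf].
    - assert (k * k < inf_deriv dg vstar vm); [|lra].
      unfold k. apply (Rmult_lt_reg_r ((vm - vstar)^2)). apply pow_lt; lra.
      replace (wstar / (vm - vstar) * (wstar / (vm - vstar)) * (vm - vstar) ^ 2) with (wstar * wstar) by (field; lra).
      lra.
    - rewrite Hinf, Rmult_0_r in HQ. lra. }
  split; [|lra].
  unfold lambda2. fold k. rewrite Hder.
  assert (HD : (2 * k - hp) ^ 2 < hp ^ 2 + 4 * dg vm).
  { assert (0 <= k * hp) by (apply Rmult_le_pos; lra). nra. }
  assert (Hs : 2 * k - hp < sqrt (hp ^ 2 + 4 * dg vm)).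
  { apply Rle_lt_trans with (Rabs (2 * k - hp)). apply Rle_abs.
    rewrite <- sqrt_Rsqr_abs. apply sqrt_lt_1_alt. split. apply Rle_0_sqr.
    unfold Rsqr. simpl in HD. lra. }
  lra.
Qed.
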